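(* Let $\mathbf{A}$ be an $n\times n$ repeated-row matrix of type $\mathbf{m}=(m_1,\dots,m_t)$ with rows $\mathbf{a}_1,\dots,\mathbf{a}_t$, and let $\mu$ be the sum-product flow on $\mathcal{T}(\mathbf{A},\mathbf{m})$. For every vertex $\boldsymbol\lambda\ne\mathbf{0}$, let $j=\lambda_1+\dots+\lambda_t$, let $\mathbf{c}_\ell=(a_{\ell1},\dots,a_{\ell j})$ for $\ell\in[t]$, and let $\mathbf{C}(\boldsymbol\lambda)$ be the $j\times j$ matrix whose rows are $\mathbf{c}_1$ repeated $\lambda_1$ times, $\mathbf{c}_2$ repeated $\lambda_2$ times, …, $\mathbf{c}_t$ repeated $\lambda_t$ times. Then $$\mathrm{per}(\mathbf{C}(\boldsymbol\lambda))=\lambda_1!\lambda_2!\cdots\lambda_t!\,\mu(\boldsymbol\lambda).$$ In particular $\mathrm{per}(\mathbf{A})=m_1!m_2!\cdots m_t!\,\mu(\mathrm{toor})$.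
   Context: $\mathrm{per}(\mathbf{B})=\sum_{\boldsymbol\sigma\in\mathbb{S}_k}\prod_i b_{i\sigma_i}$ for a $k\times k$ matrix (invariant under row permutations). An $n\times n$ matrix $\mathbf{A}$ is a repeated-row matrix of type $\mathbf{m}=(m_1,\dots,m_t)$ (positive integers with $\sum m_\ell=n$) with rows $\mathbf{a}_1,\dots,\mathbf{a}_t$, $\mathbf{a}_\ell=(a_{\ell1},\dots,a_{\ell n})$, if its rows consist of $\mathbf{a}_\ell$ repeated exactly $m_\ell$ times for each $\ell$. The trellis $\mathcal{T}(\mathbf{A},\mathbf{m})$: vertices are integer tuples $\boldsymbol\lambda=(\lambda_1,\dots,\lambda_t)$ with $0\le\lambda_\ell\le m_\ell$; layer $V_j$ consists of those with $\sum_\ell\lambda_\ell=j$ (root $\mathbf{0}$, toor $\mathbf{m}$); for $j\in[n]$, $(\boldsymbol\mu,\boldsymbol\lambda)\in V_{j-1}\times V_j$ is an edge iff there is a unique $\ell^*$ with $\lambda_{\ell^*}=\mu_{\ell^*}+1$ and $\lambda_\ell=\mu_\ell$ for $\ell\ne\ell^*$; its label is $a_{\ell^* j}$. The sum-product flow: $\mu(\mathrm{root})=1$ and $\mu(v)=\sum_{(u,v)\in E}L(u,v)\mu(u)$ layer by layer. *)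

(* Defs.v *)
From mathcomp Require Import all_boot all_order all_algebra all_fingroup.
Set Implicit Arguments. Unset Strict Implicit. Unset Printing Implicit Defensive.
Import GRing.Theory.
Local Open Scope ring_scope.

Definition per (R : comNzRingType) (k : nat) (B : 'M[R]_k) : R :=
  \sum_(s : 'S_k) \prod_(i < k) B i (s i).

(* Entry a_{l c} of the row a_l, columns 0-indexed (column c <-> paper's c+1);
   out-of-range columns give 0 (never used). *)
Definition aent (R : comNzRingType) (t n : nat) (a : 'M[R]_(t, n))
  (l : 'I_t) (c : nat) : R :=
  match insub c with Some k => a l k | None => 0 end.

Definition repeated_row (R : comNzRingType) (t n : nat) (A : 'M[R]_n)
  (m : 'I_t -> nat) (a : 'M[R]_(t, n)) : Prop :=
  exists f : 'I_n -> 'I_t,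
    (forall i : 'I_n, row i A = row (f i) a) /\
    (forall l : 'I_t, #|[set i | f i == l]| = m l).

(* Sum-product flow on the trellis T(A, m), computed layer by layer.
   flow_aux j lam is mu(lam) for a vertex lam in layer V_j: the edges into lam
   come from lam - e_l (for each l with lam_l >= 1, the unique l* of the edge),
   with label a_{l*, j} (paper's 1-indexed column j = 0-indexed column j-1). *)
Fixpoint flow_aux (R : comNzRingType) (t n : nat) (a : 'M[R]_(t, n))
  (j : nat) (lam : 'I_t -> nat) : R :=
  match j with
  | 0 => 1
  | j'.+1 => \sum_(l : 'I_t | (0 < lam l)%N)
               aent a l j' * flow_aux a j' (fun k => if k == l then (lam k).-1 else lam k)
  end.

Definition flow (R : comNzRingType) (t n : nat) (a : 'M[R]_(t, n))
  (lam : 'I_t -> nat) : R :=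
  flow_aux a (\sum_(l < t) lam l) lam.

Definition row_labels (t : nat) (lam : 'I_t -> nat) : seq 'I_t :=
  flatten [seq nseq (lam l) l | l <- enum 'I_t].

Definition Cmat (R : comNzRingType) (t n : nat) (a : 'M[R]_(t, n))
  (lam : 'I_t -> nat) : 'M[R]_(\sum_(l < t) lam l) :=
  \matrix_(i, k) nth 0 [seq aent a l k | l <- row_labels lam] i.

(* Main.v *)
Require Import Defs.
From mathcomp Require Import all_boot all_order all_algebra all_fingroup.
Set Implicit Arguments. Unset Strict Implicit. Unset Printing Implicit Defensive.
Import GRing.Theory.
Local Open Scope ring_scope.

Section S.
Variables (R : comNzRingType) (t n : nat) (a : 'M[R]_(t, n)).

Definition perF j (lab : 'I_j -> 'I_t) : R :=
  \sum_(s : 'S_j) \prod_(i < j) aent a (lab i) (s i).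

Definition cnt j (lab : 'I_j -> 'I_t) (l : 'I_t) : nat := (\sum_(i < j) (lab i == l))%N.

Lemma flow_aux_ext j (lam lam' : 'I_t -> nat) :
  (forall l, lam l = lam' l) -> flow_aux a j lam = flow_aux a j lam'.
Proof.
elim: j lam lam' => [//|j IH] lam lam' H /=.
apply: eq_big => [l|l _]; first by rewrite H.
congr (_ * _); apply: IH => k; by rewrite !H.
Qed.

Lemma cnt_lift j (lab : 'I_j.+1 -> 'I_t) i l :
  cnt (fun k => lab (lift i k)) l = if l == lab i then (cnt lab l).-1 else cnt lab l.
Proof.
rewrite /cnt (bigD1_ord i) //=.
by case: eqP => [->|/eqP]; rewrite ?eqxx // eq_sym => /negbTE ->.
Qed.

Lemma perF_S j (lab : 'I_j.+1 -> 'I_t) :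
  perF lab = \sum_(i < j.+1) aent a (lab i) j * perF (fun k : 'I_j => lab (lift i k)).
Proof.
rewrite /perF.
have -> : \sum_(s : 'S_j.+1) \prod_(i < j.+1) aent a (lab i) (s i) =
   \sum_(s : 'S_j.+1) \sum_(i < j.+1 | s i == ord_max) \prod_(k < j.+1) aent a (lab k) (s k).
  apply: eq_bigr => s _.
  rewrite [RHS](big_pred1 (s^-1 ord_max)%g) // => i /=; by apply/eqP/eqP => [<-|->]; rewrite ?permK ?permKV.
rewrite (exchange_big_dep predT) //=; apply: eq_bigr => i _.
rewrite mulr_sumr.
rewrite (reindex (lift_perm i ord_max)) /=; last first.
  pose ulsf i0 (s : 'S_j.+1) k := odflt k (unlift (s i0) (s (lift i0 k))).
  have ulsfK i0 (s : 'S__) k: lift (s i0) (ulsf i0 s k) = s (lift i0 k).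
    rewrite /ulsf; have:= neq_lift i0 k.
    by rewrite -(can_eq (permK s)) => /unlift_some[] ? ? ->.
  have inj_ulsf: injective (ulsf i _).
    move=> s; apply: can_inj (ulsf (s i) s^-1%g) _ => k'.
    by rewrite {1}/ulsf ulsfK !permK liftK.
  exists (fun s => perm (inj_ulsf s)) => [s _ | s].
    by apply/permP=> k'; rewrite permE /ulsf lift_perm_lift lift_perm_id liftK.
  move/(s _ =P _) => si0; apply/permP=> k.
  case: (unliftP i k) => [k'|] ->; rewrite ?lift_perm_id ?si0 //.
  by rewrite lift_perm_lift -si0 permE ulsfK.
under eq_bigl => s do rewrite lift_perm_id eqxx.
apply: eq_bigr => s _.
rewrite (bigD1_ord i) //= lift_perm_id /=; congr (_ * _).
by apply: eq_bigr => k _; rewrite lift_perm_lift lift_max.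
Qed.

Lemma group_sum j (lab : 'I_j -> 'I_t) (G : 'I_t -> R) :
  \sum_(i < j) G (lab i) = \sum_l (cnt lab l)%:R * G l.
Proof.
rewrite (partition_big lab predT) //=; apply: eq_bigr => l _.
rewrite /cnt natr_sum mulr_suml big_mkcond /=; apply: eq_bigr => i _.
by case: eqP => [->|]; rewrite ?mul1r ?mul0r.
Qed.

Lemma main j (lab : 'I_j -> 'I_t) :
  perF lab = (\prod_l (cnt lab l)`!)%:R * flow_aux a j (cnt lab).
Proof.
elim: j lab => [|j IH] lab.
  rewrite /perF /= (eq_bigr (fun _ => 1)); last by move=> s _; rewrite big_ord0.
  rewrite sumr_const card_Sn /= big1 ?mul1r //.
  by move=> l _; rewrite /cnt big_ord0.
rewrite perF_S.
pose G l := aent a l j * ((\prod_l' (if l' == l then (cnt lab l').-1 else cnt lab l')`!)%:R *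
   flow_aux a j (fun k => if k == l then (cnt lab k).-1 else cnt lab k)).
rewrite (eq_bigr (fun i => G (lab i))); last first.
  move=> i _; rewrite (IH (fun k : 'I_j => lab (lift i k))) /G; congr (_ * (_%:R * _)).
    by apply: eq_bigr => l _; rewrite cnt_lift.
  by apply: flow_aux_ext => l; rewrite cnt_lift.
rewrite group_sum /= mulr_sumr [RHS]big_mkcond /=; apply: eq_bigr => l _.
case E: (cnt lab l) => [|c]; first by rewrite mul0r.
rewrite /G /=.
have -> : (\prod_l0 (cnt lab l0)`! = c.+1 * \prod_l' (if l' == l then (cnt lab l').-1 else cnt lab l')`!)%N.
  rewrite (bigD1 l) // [in RHS](bigD1 l) //= (eqxx l) E factS mulnA.
  congr (_ * _)%N; apply: eq_bigr => l' /negbTE -> //.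
rewrite natrM.
by rewrite mulrCA [in RHS]mulrCA -!mulrA [_ * (c.+1%:R * _)]mulrCA.
Qed.

End S.
Lemma sum_nth_eq (T : eqType) (x0 : T) (s : seq T) J (l : T) :
  size s = J -> (\sum_(i < J) (nth x0 s i == l) = count (pred1 l) s)%N.
Proof.
move=> <-; rewrite -sum1_count (big_nth x0) big_mkord /=.
by rewrite [RHS]big_mkcond; apply: eq_bigr => i _ /=; case: eqP.
Qed.

Lemma sum_enum t (F : 'I_t -> nat) : (\sum_(l <- enum 'I_t) F l = \sum_l F l)%N.
Proof. by rewrite big_enum. Qed.

Lemma size_rl t (lam : 'I_t -> nat) : size (row_labels lam) = (\sum_l lam l)%N.
Proof.
rewrite /row_labels size_flatten /shape -map_comp sumnE big_map.
by rewrite -sum_enum; apply: eq_bigr => l _; rewrite /= size_nseq.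
Qed.

Lemma count_rl t (lam : 'I_t -> nat) l : count (pred1 l) (row_labels lam) = lam l.
Proof.
rewrite /row_labels count_flatten -map_comp sumnE big_map sum_enum.
rewrite (bigD1 l) //= count_nseq /= eqxx mul1n big1 ?addn0 //.
by move=> l' /negbTE; rewrite /= count_nseq /= eq_sym => ->.
Qed.

Theorem theorem5 (R : comNzRingType) (n t : nat) (m : 'I_t -> nat)
  (a : 'M[R]_(t, n)) (A : 'M[R]_n) :
  (forall l : 'I_t, (0 < m l)%N) ->
  (\sum_(l < t) m l)%N = n ->
  repeated_row A m a ->
  (forall lam : 'I_t -> nat,
     (forall l : 'I_t, (lam l <= m l)%N) ->
     (exists l : 'I_t, lam l != 0%N) ->
     per (Cmat a lam) = (\prod_(l < t) (lam l)`!)%:R * flow a lam)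
  /\ per A = (\prod_(l < t) (m l)`!)%:R * flow a m.
Proof.
move=> _ Hn [f [Hf Hm]]; split.
  move=> lam _ [l0 _].
  have -> : per (Cmat a lam) = perF a (fun i : 'I_(\sum_l lam l) => nth l0 (row_labels lam) i).
    rewrite /per /perF; apply: eq_bigr => s _; apply: eq_bigr => i _.
    by rewrite mxE (nth_map l0) // size_rl.
  rewrite main /flow.
  have Hc : forall l, cnt (fun i : 'I_(\sum_l lam l) => nth l0 (row_labels lam) i) l = lam l.
    by move=> l; rewrite /cnt sum_nth_eq ?count_rl ?size_rl.
  congr (_%:R * _); first by apply: eq_bigr => l _; rewrite Hc.
  exact: flow_aux_ext.
have -> : per A = perF a f.
  rewrite /per /perF; apply: eq_bigr => s _; apply: eq_bigr => i _.
  by rewrite /aent valK; have := congr1 (fun M : 'M_(1, n) => M 0 (s i)) (Hf i); rewrite !mxE.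
have Hc : forall l, cnt f l = m l.
  move=> l; rewrite -Hm /cnt cardsE -sum1_card [RHS]big_mkcond.
  apply: eq_bigr => i _; rewrite unfold_in /=.
  by have -> : eqn (f i) l = (f i == l) by []; case: (f i == l).
rewrite (main a f) /flow Hn.
congr (_%:R * _); first by apply: eq_bigr => l _; rewrite Hc.
exact: flow_aux_ext.
Qed.
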